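(* Let \[ M=\begin{pmatrix} \frac15&\frac15&\frac15&\frac15&\frac15\\ \frac35&\frac12&\frac3{10}&0&-\frac25\\ 1&\frac12&-\frac3{14}&-\frac47&\frac27\\ \frac75&0&-\frac45&\frac12&-\frac1{10}\\ \frac95&-\frac65&\frac{18}{35}&-\frac9{70}&\frac1{70} \end{pmatrix}. \] Consider real vectors $\tilde A=(\tilde A_0,\dots,\tilde A_4)$, $\tilde B=(\tilde B_0,\dots,\tilde B_4)$ satisfying: $\tilde A_0=\tilde B_0=1$; $0\le\tilde A_k\le\tilde B_k$ for $0\le k\le4$; $\sum_k\tilde A_k=\tfrac52$; $\sum_k\tilde B_k=10$; $\tilde B=2M\tilde A$; and $\tilde A_1=\tilde B_1$. Then the unique solution is \[ \tilde A=(1,0,0,0,\tfrac32),\qquad \tilde B=(1,0,\tfrac{20}7,\tfrac52,\tfrac{51}{14}). \]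
   Context: This is the normalized intrinsic linear program for two-dimensional codes detecting the adjoint (spin-1) sector inside the spin-2 irrep $V_2\cong\mathrm{Sym}^4(\mathbb C^2)$ of $\mathrm{SU}(2)$: $M$ is the unnormalized MacWilliams matrix $M_{k_1k_2}=(-1)^{4+k_1+k_2}(2k_1+1)\{\begin{smallmatrix}2&2&k_1\\2&2&k_2\end{smallmatrix}\}$ (Wigner $6j$-symbol), and the normalized enumerators of a code with projector $P$ are $\tilde A_k=\frac{N}{K^2}A_k(P,P)$, $\tilde B_k=\frac NK B_k(P,P)$ with $N=5$, $K=2$. *)

(* Defs.v *)
From mathcomp Require Import all_boot all_order all_algebra.
Set Implicit Arguments. Unset Strict Implicit. Unset Printing Implicit Defensive.
Import Order.TTheory GRing.Theory Num.Theory.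
Local Open Scope ring_scope.

(* Normalized MacWilliams matrix M (rows k1 = 0..4, columns k2 = 0..4). *)
Definition Mrows (R : realFieldType) : seq (seq R) :=
  [:: [:: 1/5; 1/5; 1/5; 1/5; 1/5];
      [:: 3/5; 1/2; 3/10; 0; -(2/5)];
      [:: 1; 1/2; -(3/14); -(4/7); 2/7];
      [:: 7/5; 0; -(4/5); 1/2; -(1/10)];
      [:: 9/5; -(6/5); 18/35; -(9/70); 1/70]].

Definition Mmx (R : realFieldType) : 'M[R]_5 :=
  \matrix_(i < 5, j < 5) nth 0 (nth [::] (Mrows R) i) j.

Definition vec5 (R : realFieldType) (s : seq R) : 'cV[R]_5 :=
  \col_(i < 5) nth 0 s i.

Definition LPfeasible (R : realFieldType) (A B : 'cV[R]_5) : Prop :=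
  A ord0 ord0 = 1 /\ B ord0 ord0 = 1 /\
  (forall k : 'I_5, 0 <= A k ord0 /\ A k ord0 <= B k ord0) /\
  \sum_(k < 5) A k ord0 = 5/2 /\
  \sum_(k < 5) B k ord0 = 10 /\
  B = 2 *: (Mmx R *m A) /\
  A (inord 1) ord0 = B (inord 1) ord0.

(* Main.v *)
Require Import Defs.
From mathcomp Require Import all_boot all_order all_algebra lra.
Import Order.TTheory GRing.Theory Num.Theory.
Local Open Scope ring_scope.

Lemma sum5 (R : realFieldType) (F : 'I_5 -> R) :
  \sum_(k < 5) F k = F (inord 0) + F (inord 1) + F (inord 2) + F (inord 3) + F (inord 4).
Proof.
rewrite !big_ord_recr big_ord0 /= add0r.
by do !congr (_ + _); congr F; apply: val_inj; rewrite /= inordK.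
Qed.

Lemma ord5 (P : 'I_5 -> Prop) : P (inord 0) -> P (inord 1) -> P (inord 2) -> P (inord 3) -> P (inord 4) -> forall i, P i.
Proof.
move=> h0 h1 h2 h3 h4 [[|[|[|[|[|n]]]]] hn] //.
- by have -> : Ordinal hn = inord 0 by apply: val_inj; rewrite /= inordK.
- by have -> : Ordinal hn = inord 1 by apply: val_inj; rewrite /= inordK.
- by have -> : Ordinal hn = inord 2 by apply: val_inj; rewrite /= inordK.
- by have -> : Ordinal hn = inord 3 by apply: val_inj; rewrite /= inordK.
- by have -> : Ordinal hn = inord 4 by apply: val_inj; rewrite /= inordK.
Qed.

Lemma Mval (R : realFieldType) (i j : nat) : (i < 5)%N -> (j < 5)%N ->
  Mmx R (inord i) (inord j) = nth 0 (nth [::] (Mrows R) i) j.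
Proof. by move=> hi hj; rewrite mxE !inordK. Qed.

Theorem mainTheorem12 (R : realFieldType) (A B : 'cV[R]_5) :
  LPfeasible A B <->
  (A = vec5 [:: 1; 0; 0; 0; 3/2] /\ B = vec5 [:: 1; 0; 20/7; 5/2; 51/14]).
Proof.
have e0 : (ord0 : 'I_5) = inord 0 by apply: val_inj; rewrite /= inordK.
split.
- move=> [HA0 [HB0 [Hle [HsA [HsB [HB H1]]]]]].
  have eB : forall i : 'I_5, B i ord0 = 2 * \sum_(j<5) Mmx R i j * A j ord0.
    by move=> i; rewrite HB !mxE.
  rewrite e0 in HA0 HB0.
  rewrite sum5 in HsA. rewrite sum5 in HsB.
  have := eB (inord 1); have := eB (inord 2); have := eB (inord 3); have := eB (inord 4).
  rewrite !sum5 !Mval //=.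
  move=> E4 E3 E2 E1.
  have [l0 _] := Hle (inord 1); have [l1 _] := Hle (inord 2); have [l2 _] := Hle (inord 3).
  have a1 : A (inord 1) ord0 = 0 by lra.
  have a2 : A (inord 2) ord0 = 0 by lra.
  have a3 : A (inord 3) ord0 = 0 by lra.
  have a4 : A (inord 4) ord0 = 3/2 by lra.
  split; apply/matrixP => i j; rewrite (ord1 j) {j} mxE; move: i; apply: ord5; rewrite ?inordK //=; lra.
- move=> [-> ->]; rewrite /LPfeasible !mxE /=.
  split; first by []. split; first by [].
  split. apply: ord5; rewrite !mxE ?inordK //=; lra.
  rewrite !sum5 !mxE !inordK //=.
  split; first lra. split; first lra.
  split; last by [].
  apply/matrixP => i j; rewrite (ord1 j) {j} !mxE sum5; move: i; apply: ord5;
  rewrite !mxE !inordK //=; lra.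
Qed.
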